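(* Let $\mathscr H$ be a separable complex Hilbert space, $d\ge1$ an integer, and let $F=(F_{ij})_{0\le i,j\le d}$ be a matrix of operators in $\mathscr H$, with $F_{00}=K$, $F_{i0}=R_i$, $F_{0j}=N_j$ ($i,j\ge1$), satisfying Hypothesis (C) below. Then: (1) $\mathrm{Dom}(R_k)\supset \mathrm{Dom}(K)\cup\mathrm{Dom}(K^* )$ and $\mathrm{Dom}(N_k^* )\supset\mathrm{Dom}(K)\cup\mathrm{Dom}(K^* )$ for all $k\ge1$. (2) $\mathrm{Dom}(F)=\mathrm{Dom}(K)$; moreover $2\mathrm{Re}\langle Ku|u\rangle=-\sum_{k\ge1}\|R_ku\|^2$ for all $u\in\mathrm{Dom}(K)$ and $2\mathrm{Re}\langle K^*v|v\rangle=-\sum_{k\ge1}\|N_k^*v\|^2$ for all $v\in\mathrm{Dom}(K^* )$. (3) For all $u\in\mathrm{Dom}(K)\cup\mathrm{Dom}(K^* )$ and all $i\ge1$: $N_i^*u=-\sum_{k\ge1}S_{ki}^*R_ku$ and $R_iu=-\sum_{k\ge1}S_{ik}N_k^*u$. (4) For all $u\in\mathrm{Dom}(K)$ and $i=1,\dots,d$: $N_iu=-\sum_{k\ge1}R_k^*S_{ki}u$. (5) For every choice of $u_0,\dots,u_d\in\mathrm{Dom}(F)$ and $v_0,\dots,v_d\in\widetilde D$, \[\sum_{i,j\ge0}\Big(\langle u_i|F_{ij}u_j\rangle+\langle F_{ji}u_i|u_j\rangle+\sum_{k\ge1}\langle F_{ki}u_i|F_{kj}u_j\rangle\Big)=0,\]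 \[\sum_{i,j\ge0}\Big(\langle v_i|F_{ji}^*v_j\rangle+\langle F_{ij}^*v_i|v_j\rangle+\sum_{k\ge1}\langle F_{ik}^*v_i|F_{jk}^*v_j\rangle\Big)=0.\]
   Context: Hypothesis (C): (i) each $F_{ij}$ is a closed operator in $\mathscr H$; set $\mathrm{Dom}(F)=\bigcap_{i,j\ge0}\mathrm{Dom}(F_{ij})$ and $\mathrm{Dom}(F^* )=\bigcap_{i,j\ge0}\mathrm{Dom}(F_{ji}^* )$. (ii) For $1\le i,j\le d$, $F_{ij}=S_{ij}-\delta_{ij}\mathbb 1$, where the $S_{ij}$ are bounded operators with $\sum_{k=1}^dS_{ki}^*S_{kj}=\sum_{k=1}^dS_{ik}S_{jk}^*=\delta_{ij}\mathbb 1$. (iii) There is a dense subspace $D$ which is a core for $K,R_i,N_i$ ($i=1,\dots,d$) and a dense subspace $\widetilde D$ which is a core for $K^*,R_i^*,N_i^*$ ($i=1,\dots,d$). (iv) $\mathrm{Dom}(N_i^* )\supset D\cup\widetilde D$, $\mathrm{Dom}(R_i)\supset D\cup\widetilde D$, $\mathrm{Dom}(N_i)\supset\mathrm{Dom}(K)$ for all $i\ge1$. (v) For all $k,i\ge1$ and $u\in\mathrm{Dom}(K)$: $S_{ki}u\in\mathrm{Dom}(R_k^* )$. (vi) $K$ and $K^*$ are generators of strongly continuous contraction semigroups on $\mathscr H$, and $2\mathrm{Re}\langle Ku|u\rangle=-\sum_{k\ge1}\|R_ku\|^2$ for all $u\in D$, $2\mathrm{Re}\langle K^*v|v\rangle=-\sum_{k\ge1}\|N_k^*v\|^2$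 for all $v\in\widetilde D$. (vii) $N_i^*u=-\sum_{k\ge1}S_{ki}^*R_ku$ for all $u\in D\cup\widetilde D$, $i\ge1$. (viii) There exist a positive self-adjoint operator $C$ on $\mathscr H$ and constants $\delta>0$, $b_1,b_2\ge0$ with $\mathrm{Dom}(C^{1/2})\subset\mathrm{Dom}(F)$ such that, with $C_\epsilon:=C(1+\epsilon C)^{-2}$: (a) for each $\epsilon\in(0,\delta)$ there is a dense subspace $D_\epsilon\subset\widetilde D$ with $C_\epsilon^{1/2}D_\epsilon\subset\widetilde D$ and each $F_{ij}^*C_\epsilon^{1/2}|_{D_\epsilon}$ bounded; (b) for all $\epsilon\in(0,\delta)$ and $u_0,\dots,u_d\in\mathrm{Dom}(F)$, $\sum_{i,j\ge0}\big(\langle u_i|C_\epsilon F_{ij}u_j\rangle+\langle F_{ji}u_i|C_\epsilon u_j\rangle+\sum_{k\ge1}\langle F_{ki}u_i|C_\epsilon F_{kj}u_j\rangle\big)\le\sum_{i\ge0}\big(b_1\langle u_i|C_\epsilon u_i\rangle+b_2\|u_i\|^2\big)$. *)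

(* Defs.v *)
From mathcomp Require Import all_boot all_order all_algebra.
From mathcomp.reals Require Import reals.
From mathcomp.real_closed Require Import complex.
From Stdlib Require Import ClassicalEpsilon.
Set Implicit Arguments. Unset Strict Implicit. Unset Printing Implicit Defensive.
Import Order.TTheory GRing.Theory Num.Theory.
Local Open Scope ring_scope.
Local Open Scope complex_scope.

Record op (V : Type) := Op { dom : V -> Prop; app : V -> V }.
Arguments Op {V}.
Arguments dom {V}.
Arguments app {V}.

Definition tot {V : Type} (f : V -> V) : op V := Op (fun _ => True) f.

Definition subsetV {V : Type} (A B : V -> Prop) := forall x, A x -> B x.

Section Hilbert.
Variables (R : realType) (V : lmodType R[i]).
(* ip u v = <u|v>, antilinear in u, linear in v *)
Variable ip : V -> V -> R[i].

Definition hnorm (u : V) : R := Num.sqrt (complex.Re (ip u u)).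

Definition inner_product : Prop :=
  [/\ (forall (a : R[i]) u v w, ip u (a *: v + w) = a * ip u v + ip u w),
      (forall u v, ip v u = (ip u v)^*),
      (forall u, 0 <= ip u u) &
      (forall u, ip u u = 0 -> u = 0)].

Definition cvgV (x : nat -> V) (l : V) : Prop :=
  forall e : R, 0 < e -> exists N, forall n, (N <= n)%N -> hnorm (x n - l) < e.

Definition cauchyV (x : nat -> V) : Prop :=
  forall e : R, 0 < e -> exists N, forall n m, (N <= n)%N -> (N <= m)%N ->
    hnorm (x n - x m) < e.

Definition dense (S : V -> Prop) : Prop :=
  forall u (e : R), 0 < e -> exists w, S w /\ hnorm (u - w) < e.

Definition is_hilbert : Prop :=
  [/\ inner_product,
      (forall x, cauchyV x -> exists l, cvgV x l) &
      (exists s : nat -> V, dense (fun w => exists n, w = s n))].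

Definition subspace (S : V -> Prop) : Prop :=
  S 0 /\ forall (a : R[i]) u v, S u -> S v -> S (a *: u + v).

Definition linear_on (S : V -> Prop) (f : V -> V) : Prop :=
  forall (a : R[i]) u v, S u -> S v -> f (a *: u + v) = a *: f u + f v.

Definition is_op (A : op V) : Prop := subspace (dom A) /\ linear_on (dom A) (app A).

Definition closed_op (A : op V) : Prop :=
  is_op A /\
  forall (x : nat -> V) u w, (forall n, dom A (x n)) -> cvgV x u ->
    cvgV (fun n => app A (x n)) w -> dom A u /\ app A u = w.

Definition bounded (f : V -> V) : Prop :=
  linear_on (fun _ => True) f /\ exists M : R, forall u, hnorm (f u) <= M * hnorm u.

Definition adj_dom (A : op V) (v : V) : Prop :=
  exists w, forall u, dom A u -> ip v (app A u) = ip w u.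
Definition adj (A : op V) : op V :=
  Op (adj_dom A)
     (fun v => epsilon (inhabits 0)
        (fun w => forall u, dom A u -> ip v (app A u) = ip w u)).

Definition is_core (D : V -> Prop) (A : op V) : Prop :=
  subsetV D (dom A) /\
  forall u, dom A u -> exists x : nat -> V,
    [/\ forall n, D (x n), cvgV x u & cvgV (fun n => app A (x n)) (app A u)].

Definition rlim0 (f : R -> V) (l : V) : Prop :=
  forall e : R, 0 < e -> exists del : R, 0 < del /\
    forall t : R, 0 < t -> t < del -> hnorm (f t - l) < e.

Definition contraction_generator (A : op V) : Prop :=
  exists T : R -> V -> V,
  [/\ (forall t, 0 <= t -> bounded (T t) /\ forall u, hnorm (T t u) <= hnorm u)
         /\ (forall u, T 0 u = u),
      forall s t u, 0 <= s -> 0 <= t -> T (s + t) u = T s (T t u),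
      forall u, rlim0 (fun t => T t u) u,
      forall u, dom A u <-> exists w, rlim0 (fun t => (t^-1)%:C *: (T t u - u)) w &
      forall u, dom A u -> rlim0 (fun t => (t^-1)%:C *: (T t u - u)) (app A u)].

Definition self_adjoint (A : op V) : Prop :=
  [/\ is_op A, dense (dom A),
      (forall v, dom (adj A) v <-> dom A v) &
      forall v, dom A v -> app (adj A) v = app A v].

Definition pos_self_adjoint (A : op V) : Prop :=
  self_adjoint A /\ forall u, dom A u -> 0 <= ip u (app A u).

Definition is_sqrt (B A : op V) : Prop :=
  [/\ pos_self_adjoint B,
      (forall u, dom A u <-> dom B u /\ dom B (app B u)) &
      forall u, dom A u -> app A u = app B (app B u)].

(* resolvent-type operator (1 + e A)^{-1} *)
Definition res1 (A : op V) (e : R) (u : V) : V :=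
  epsilon (inhabits 0) (fun w => dom A w /\ w + e%:C *: app A w = u).

(* C_eps := C (1 + eps C)^{-2}, a bounded everywhere defined operator *)
Definition Ceps (C : op V) (e : R) : op V :=
  tot (fun u => app C (res1 C e (res1 C e u))).

End Hilbert.

(* Main.v *)
Require Import Defs.
From mathcomp Require Import all_boot all_order all_algebra.
From mathcomp.reals Require Import reals.
From mathcomp.real_closed Require Import complex.
Import Order.TTheory GRing.Theory Num.Theory.
Local Open Scope ring_scope.
Local Open Scope complex_scope.
From Stdlib Require Import ClassicalEpsilon.
From mathcomp Require Import ring lra.
Import Order.TTheory GRing.Theory Num.Theory.

Set Implicit Arguments. Unset Strict Implicit. Unset Printing Implicit Defensive.

Section Basic.
Variables (R : realType) (V : lmodType R[i]) (ip : V -> V -> R[i]).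
Hypothesis Hip : inner_product ip.
Local Notation nrm := (hnorm ip).

Lemma ipDr u v w : ip u (v + w) = ip u v + ip u w.
Proof. by case: Hip => H _ _ _; have := H 1 u v w; rewrite scale1r mul1r. Qed.

Lemma ip0r u : ip u 0 = 0.
Proof. have := ipDr u 0 0; rewrite addr0 -{1}(addr0 (ip u 0)) => /addrI; done. Qed.

Lemma ipZr a u v : ip u (a *: v) = a * ip u v.
Proof.
case: Hip => H _ _ _; have := H a u v 0.
by rewrite !addr0 ip0r addr0.
Qed.

Lemma conjcD (a b : R[i]) : conjc (a + b) = conjc a + conjc b.
Proof. by case: a => ? ?; case: b => ? ? /=; rewrite opprD. Qed.
Lemma conjcM (a b : R[i]) : conjc (a * b) = conjc a * conjc b.
Proof. by case: a => ? ?; case: b => ? ? /=; congr (_ +i* _); ring. Qed.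
Lemma conjc0' : conjc (0 : R[i]) = 0.
Proof. by rewrite /= oppr0. Qed.
Lemma conjcK' (a : R[i]) : conjc (conjc a) = a.
Proof. by case: a => ? ? /=; rewrite opprK. Qed.
Lemma conjcR (a : R) : conjc (a%:C) = a%:C.
Proof. by rewrite /= oppr0. Qed.

Lemma ipC u v : ip v u = conjc (ip u v).
Proof. by case: Hip. Qed.

Lemma ipDl u v w : ip (v + w) u = ip v u + ip w u.
Proof. by rewrite ipC ipDr conjcD -!ipC. Qed.

Lemma ipZl a u v : ip (a *: v) u = conjc a * ip v u.
Proof. by rewrite ipC ipZr conjcM -ipC. Qed.

Lemma ip0l u : ip 0 u = 0.
Proof. by rewrite ipC ip0r conjc0'. Qed.

Lemma ipNr u v : ip u (- v) = - ip u v.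
Proof. by apply/eqP; rewrite -subr_eq0 opprK -ipDr addNr ip0r. Qed.

Lemma ipNl u v : ip (- u) v = - ip u v.
Proof. by apply/eqP; rewrite -subr_eq0 opprK -ipDl addNr ip0l. Qed.

Lemma ipBr u v w : ip u (v - w) = ip u v - ip u w.
Proof. by rewrite ipDr ipNr. Qed.

Lemma ipBl u v w : ip (v - w) u = ip v u - ip w u.
Proof. by rewrite ipDl ipNl. Qed.

Lemma ip_sumr (I : Type) (r : seq I) (P : pred I) (f : I -> V) u :
  ip u (\sum_(i <- r | P i) f i) = \sum_(i <- r | P i) ip u (f i).
Proof. exact: (big_morph _ (ipDr u) (ip0r u)). Qed.

Lemma ip_suml (I : Type) (r : seq I) (P : pred I) (f : I -> V) u :
  ip (\sum_(i <- r | P i) f i) u = \sum_(i <- r | P i) ip (f i) u.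
Proof. exact: (big_morph _ (fun a b => ipDl u a b) (ip0l u)). Qed.

Lemma ip_ge0 u : 0 <= ip u u.
Proof. by case: Hip. Qed.

Lemma ip_eq0 u : ip u u = 0 -> u = 0.
Proof. by case: Hip => _ _ _; apply. Qed.

Lemma Im_ip u : complex.Im (ip u u) = 0.
Proof. by have := ip_ge0 u; rewrite lecE => /andP[/eqP -> _]. Qed.

Lemma Re_ip_ge0 u : 0 <= complex.Re (ip u u).
Proof. by have := ip_ge0 u; rewrite lecE => /andP[_]. Qed.

Lemma ipRe u : ip u u = (complex.Re (ip u u))%:C.
Proof. by move: (Im_ip u); case: (ip u u) => a b /= ->. Qed.

Lemma nrm_ge0 u : 0 <= nrm u.
Proof. exact: sqrtr_ge0. Qed.

Lemma nrm_sq u : nrm u ^+ 2 = complex.Re (ip u u).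
Proof. by rewrite /hnorm sqr_sqrtr // Re_ip_ge0. Qed.

Lemma nrm_eq0 u : nrm u = 0 -> u = 0.
Proof.
move=> h; apply: ip_eq0; rewrite ipRe -nrm_sq h.
by rewrite expr0n.
Qed.

Lemma nrm0 : nrm 0 = 0.
Proof. by rewrite /hnorm ip0r sqrtr0. Qed.

Lemma ReJc (z : R[i]) : complex.Re (conjc z) = complex.Re z.
Proof. by case: z. Qed.

Lemma ReC u v : complex.Re (ip v u) = complex.Re (ip u v).
Proof. by rewrite ipC ReJc. Qed.

Lemma ReDc (z w : R[i]) : complex.Re (z + w) = complex.Re z + complex.Re w.
Proof. by case: z; case: w. Qed.

Lemma ReNc (z : R[i]) : complex.Re (- z) = - complex.Re z.
Proof. by case: z. Qed.

Lemma ReBc (z w : R[i]) : complex.Re (z - w) = complex.Re z - complex.Re w.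
Proof. by rewrite ReDc ReNc. Qed.

Lemma ReMrC (a : R) (z : R[i]) : complex.Re (a%:C * z) = a * complex.Re z.
Proof. by case: z => x y /=; rewrite mul0r subr0. Qed.

Lemma Re_sumc (I : Type) (r : seq I) (P : pred I) (f : I -> R[i]) :
  complex.Re (\sum_(i <- r | P i) f i) = \sum_(i <- r | P i) complex.Re (f i).
Proof. exact: (big_morph _ ReDc). Qed.

Lemma nrmN u : nrm (- u) = nrm u.
Proof. by rewrite /hnorm ipNl ipNr opprK. Qed.

Lemma nrm_expand (a b : R) u v :
  complex.Re (ip (a%:C *: u + b%:C *: v) (a%:C *: u + b%:C *: v))
  = a ^+ 2 * nrm u ^+ 2 + 2 * a * b * complex.Re (ip u v) + b ^+ 2 * nrm v ^+ 2.
Proof.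
rewrite !ipDl !ipDr !ipZl !ipZr !conjcR !ReDc !ReMrC !nrm_sq (ReC u v).
ring.
Qed.

Lemma CS u v : complex.Re (ip u v) <= nrm u * nrm v.
Proof.
have [a0|an0] := eqVneq (nrm u) 0.
  by rewrite (nrm_eq0 a0) ip0l nrm0 mul0r.
have [b0|bn0] := eqVneq (nrm v) 0.
  by rewrite (nrm_eq0 b0) ip0r nrm0 mulr0.
have h := Re_ip_ge0 ((nrm v)%:C *: u + (- nrm u)%:C *: v).
rewrite nrm_expand in h.
have hp : 0 < nrm u * nrm v by rewrite mulr_gt0 // lt0r ?an0 ?bn0 nrm_ge0.
have : 0 <= (nrm u * nrm v) * (2 * (nrm u * nrm v - complex.Re (ip u v))).
  by move: h; set x := complex.Re _; set p := nrm u; set q := nrm v => h; nra.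
rewrite pmulr_rge0 // pmulr_rge0 // subr_ge0 //.
Qed.

Lemma CSabs u v : `|complex.Re (ip u v)| <= nrm u * nrm v.
Proof.
rewrite ler_norml CS andbT.
have := CS (- u) v; rewrite ipNl ReNc nrmN.
by rewrite lerNl.
Qed.

Lemma nrmD u v : nrm (u + v) <= nrm u + nrm v.
Proof.
rewrite -ler_sqr ?nnegrE ?nrm_ge0 ?(addr_ge0 (nrm_ge0 _) (nrm_ge0 _)) //.
rewrite nrm_sq ipDl !ipDr !ReDc (ReC u v) -!nrm_sq.
have := CS u v; set x := complex.Re _ => h.
have -> : (nrm u + nrm v) ^+ 2 = nrm u ^+ 2 + 2 * (nrm u * nrm v) + nrm v ^+ 2 by ring.
lra.
Qed.

Lemma nrmB u v : nrm (u - v) <= nrm u + nrm v.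
Proof. by rewrite -(nrmN v) nrmD. Qed.

Lemma nrm_sub_sym u v : nrm (u - v) = nrm (v - u).
Proof. by rewrite -nrmN opprB. Qed.

End Basic.


Section Cvg.
Variables (R : realType) (V : lmodType R[i]) (ip : V -> V -> R[i]).
Hypothesis Hip : inner_product ip.
Local Notation nrm := (hnorm ip).
Local Notation cvgV := (cvgV ip).

Definition cvgr (a : nat -> R) (l : R) :=
  forall e : R, 0 < e -> exists N, forall n, (N <= n)%N -> `|a n - l| < e.

Lemma maxnP (N1 N2 n : nat) : (maxn N1 N2 <= n)%N -> (N1 <= n)%N /\ (N2 <= n)%N.
Proof. by rewrite geq_max => /andP. Qed.

Lemma cvgV_uniq x a b : cvgV x a -> cvgV x b -> a = b.
Proof.
move=> ha hb; apply/eqP; rewrite -subr_eq0; apply/eqP; apply: (nrm_eq0 Hip); apply/eqP; rewrite eq_le nrm_ge0 andbT.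
apply/ler_addgt0Pr => e e0; rewrite add0r.
have e2 : 0 < e / 2 by rewrite divr_gt0.
have [N1 h1] := ha _ e2; have [N2 h2] := hb _ e2.
have := h1 (maxn N1 N2) (leq_maxl _ _); have := h2 (maxn N1 N2) (leq_maxr _ _).
set y := x _ => p q.
have : nrm (a - b) <= nrm (y - b) + nrm (y - a).
  have -> : a - b = (y - b) - (y - a) by rewrite opprB [RHS]addrC addrA subrK.
  exact: nrmB.
move=> r; apply/ltW; apply: (le_lt_trans r); lra.
Qed.

Lemma cvgV_add x y a b : cvgV x a -> cvgV y b -> cvgV (fun n => x n + y n) (a + b).
Proof.
move=> ha hb e e0.
have e2 : 0 < e / 2 by rewrite divr_gt0.
have [N1 h1] := ha _ e2; have [N2 h2] := hb _ e2.
exists (maxn N1 N2) => n /maxnP [n1 n2].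
have -> : x n + y n - (a + b) = (x n - a) + (y n - b).
  by rewrite opprD addrACA.
apply: (le_lt_trans (nrmD Hip _ _)).
have := h1 n n1; have := h2 n n2; lra.
Qed.

Lemma cvgV_opp x a : cvgV x a -> cvgV (fun n => - x n) (- a).
Proof.
move=> ha e e0; have [N h] := ha _ e0; exists N => n hn.
by rewrite -opprD (nrmN Hip); apply: h.
Qed.

Lemma cvgV_const a : cvgV (fun _ => a) a.
Proof. by move=> e e0; exists 0%N => n _; rewrite subrr (nrm0 Hip). Qed.

Lemma cvgV_ext x y a : (forall n, x n = y n) -> cvgV x a -> cvgV y a.
Proof. by move=> h ha e e0; have [N hN] := ha e e0; exists N => n hn; rewrite -h; apply: hN. Qed.

Lemma cvgV_sum (I : Type) (r : seq I) (P : pred I) (x : I -> nat -> V) (a : I -> V) :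
  (forall i, P i -> cvgV (x i) (a i)) ->
  cvgV (fun n => \sum_(i <- r | P i) x i n) (\sum_(i <- r | P i) a i).
Proof.
move=> h; elim: r => [|j r IH].
  apply: (@cvgV_ext (fun _ => 0)); first by move=> n; rewrite big_nil.
  by rewrite big_nil; apply: cvgV_const.
rewrite big_cons; apply: (@cvgV_ext (fun n => if P j then x j n + \sum_(i <- r | P i) x i n
   else \sum_(i <- r | P i) x i n)); first by move=> n; rewrite big_cons.
case Pj: (P j) => //; exact: cvgV_add (h j Pj) IH.
Qed.

Lemma cvgV_bounded (S : V -> V) x a : bounded ip S -> cvgV x a ->
  cvgV (fun n => S (x n)) (S a).
Proof.
move=> [lin [M hM]] ha e e0.
have M0 : 0 < `|M| + 1 by rewrite ltr_pwDr // normr_ge0.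
have [N h] := ha (e / (`|M| + 1)) (divr_gt0 e0 M0).
exists N => n hn.
have -> : S (x n) - S a = S (x n - a).
  have := lin (-1) a (x n) I I; rewrite !scaleN1r => h1.
  by rewrite [x n - a]addrC h1 addrC.
apply: (le_lt_trans (hM _)).
have hx := h n hn; have hn0 := nrm_ge0 ip (x n - a).
have : M * nrm (x n - a) <= (`|M| + 1) * nrm (x n - a).
  by apply: ler_wpM2r => //; apply: le_trans (ler_norm M) _; rewrite lerDl.
move=> p; apply: (le_lt_trans p).
by rewrite mulrC -ltr_pdivlMr.
Qed.

Lemma cvg_cauchy x a : cvgV x a -> cauchyV ip x.
Proof.
move=> ha e e0.
have e2 : 0 < e / 2 by rewrite divr_gt0.
have [N h] := ha _ e2; exists N => n m hn hm.
have -> : x n - x m = (x n - a) - (x m - a) by rewrite opprB [RHS]addrA subrK.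
apply: (le_lt_trans (nrmB Hip _ _)).
have := h n hn; have := h m hm; lra.
Qed.


Lemma cvgr_ext f g l : (forall n, f n = g n) -> cvgr f l -> cvgr g l.
Proof. by move=> h ha e e0; have [N hN] := ha e e0; exists N => n hn; rewrite -h; apply: hN. Qed.

Lemma cvgr_const c : cvgr (fun _ => c) c.
Proof. by move=> e e0; exists 0%N => n _; rewrite subrr normr0. Qed.

Lemma cvgr_add f g a b : cvgr f a -> cvgr g b -> cvgr (fun n => f n + g n) (a + b).
Proof.
move=> ha hb e e0.
have e2 : 0 < e / 2 by rewrite divr_gt0.
have [N1 h1] := ha _ e2; have [N2 h2] := hb _ e2.
exists (maxn N1 N2) => n /maxnP [n1 n2].
have -> : f n + g n - (a + b) = (f n - a) + (g n - b) by ring.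
apply: (le_lt_trans (ler_normD _ _)).
have := h1 n n1; have := h2 n n2; lra.
Qed.

Lemma cvgr_scale c f a : cvgr f a -> cvgr (fun n => c * f n) (c * a).
Proof.
move=> ha e e0.
have c0 : 0 < `|c| + 1 by rewrite ltr_pwDr // normr_ge0.
have [N h] := ha (e / (`|c| + 1)) (divr_gt0 e0 c0).
exists N => n hn.
have -> : c * f n - c * a = c * (f n - a) by ring.
rewrite normrM.
have hx := h n hn; have hn0 := normr_ge0 (f n - a).
have : `|c| * `|f n - a| <= (`|c| + 1) * `|f n - a|.
  by apply: ler_wpM2r => //; rewrite lerDl.
move=> p; apply: (le_lt_trans p).
by rewrite mulrC -ltr_pdivlMr.
Qed.

Lemma cvgr_sum (I : Type) (r : seq I) (P : pred I) (f : I -> nat -> R) (a : I -> R) :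
  (forall i, P i -> cvgr (f i) (a i)) ->
  cvgr (fun n => \sum_(i <- r | P i) f i n) (\sum_(i <- r | P i) a i).
Proof.
move=> h; elim: r => [|j r IH].
  apply: (@cvgr_ext (fun _ => 0)); first by move=> n; rewrite big_nil.
  by rewrite big_nil; apply: cvgr_const.
rewrite big_cons; apply: (@cvgr_ext (fun n => if P j then f j n + \sum_(i <- r | P i) f i n
   else \sum_(i <- r | P i) f i n)); first by move=> n; rewrite big_cons.
case Pj: (P j) => //; exact: cvgr_add (h j Pj) IH.
Qed.

Lemma cvgr_zero f l : (forall n, f n = 0) -> cvgr f l -> l = 0.
Proof.
move=> h0 h; apply/eqP; rewrite -normr_eq0 eq_le normr_ge0 andbT.
apply/ler_addgt0Pr => e e0; rewrite add0r.
have [N hN] := h e e0; have := hN N (leqnn N); rewrite h0 sub0r normrN.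
by move/ltW.
Qed.

Lemma cvg_ipRe x y a b : cvgV x a -> cvgV y b ->
  cvgr (fun n => complex.Re (ip (x n) (y n))) (complex.Re (ip a b)).
Proof.
move=> ha hb e e0.
set K := nrm a + nrm b + 2.
have K0 : 0 < K by rewrite /K; have := nrm_ge0 ip a; have := nrm_ge0 ip b; lra.
set eta := Num.min 1 (e / K).
have eta0 : 0 < eta by rewrite lt_min ltr01 divr_gt0.
have eta1 : eta <= 1 by rewrite ge_min lexx.
have etaK : eta * K <= e by rewrite -ler_pdivlMr // ge_min lexx orbT.
have [N1 h1] := ha _ eta0; have [N2 h2] := hb _ eta0.
exists (maxn N1 N2) => n /maxnP [n1 n2].
have -> : complex.Re (ip (x n) (y n)) - complex.Re (ip a b)
   = complex.Re (ip (x n - a) (y n)) + complex.Re (ip a (y n - b)).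
  by rewrite ipBl ?ipBr // !ReBc; ring.
apply: (le_lt_trans (ler_normD _ _)).
have c1 := CSabs Hip (x n - a) (y n); have c2 := CSabs Hip a (y n - b).
have hy : nrm (y n) <= nrm b + nrm (y n - b).
  by rewrite -{1}(subrK b (y n)) addrC nrmD.
have p1 := h1 n n1; have p2 := h2 n n2.
have q1 := nrm_ge0 ip (x n - a); have q2 := nrm_ge0 ip (y n - b).
have q3 := nrm_ge0 ip a; have q4 := nrm_ge0 ip b; have q5 := nrm_ge0 ip (y n).
have : nrm (x n - a) * nrm (y n) <= eta * (nrm b + 1).
  apply: le_trans (_ : eta * nrm (y n) <= _).
    by apply: ler_wpM2r => //; apply: ltW.
  by apply: ler_wpM2l; [apply: ltW|lra].
have : nrm a * nrm (y n - b) <= nrm a * eta.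
  by apply: ler_wpM2l => //; apply: ltW.
move: etaK; rewrite /K; nra.
Qed.

End Cvg.


Section Ops.
Variables (R : realType) (V : lmodType R[i]) (ip : V -> V -> R[i]).
Hypothesis Hip : inner_product ip.
Local Notation nrm := (hnorm ip).
Local Notation cvgV := (cvgV ip).
Local Notation adj := (adj ip).

Lemma adj_spec (A : op V) v : adj_dom ip A v ->
  forall u, dom A u -> ip v (app A u) = ip (app (adj A) v) u.
Proof.
move=> h; rewrite /adj /=.
by apply: (epsilon_spec (inhabits 0) (fun w => forall u, dom A u -> ip v (app A u) = ip w u)).
Qed.

Lemma ortho_dense (S : V -> Prop) w : dense ip S -> (forall u, S u -> ip w u = 0) -> w = 0.
Proof.
move=> hd h; apply: (nrm_eq0 Hip); apply/eqP; rewrite eq_le nrm_ge0 andbT.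
apply/ler_addgt0Pr => e e0; rewrite add0r.
have [s [Ss hs]] := hd w e e0.
have h1 : nrm w ^+ 2 <= nrm w * e.
  rewrite (nrm_sq Hip).
  have -> : complex.Re (ip w w) = complex.Re (ip w (w - s)) by rewrite (ipBr Hip) (h s Ss) subr0.
  apply: le_trans (CS Hip w (w - s)) _.
  by apply: ler_wpM2l; [apply: nrm_ge0|apply: ltW].
have n0 := nrm_ge0 ip w; nra.
Qed.

Lemma eq_dense (S : V -> Prop) a b : dense ip S -> (forall s, S s -> ip s a = ip s b) -> a = b.
Proof.
move=> hd h; apply/eqP; rewrite -subr_eq0; apply/eqP.
apply: (@ortho_dense S (a - b) hd) => u Su.
by rewrite (ipBl Hip) (ipC Hip u a) (ipC Hip u b) (h u Su) subrr.
Qed.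

Lemma adj_unique (A : op V) v w : dense ip (dom A) -> adj_dom ip A v ->
  (forall u, dom A u -> ip v (app A u) = ip w u) -> app (adj A) v = w.
Proof.
move=> hd hv h; apply/eqP; rewrite -subr_eq0; apply/eqP.
apply: (@ortho_dense (dom A) (app (adj A) v - w) hd) => u Du.
by rewrite (ipBl Hip) -adj_spec // (h u Du) subrr.
Qed.

Lemma adj_dom_lin (A : op V) c v v' : adj_dom ip A v -> adj_dom ip A v' ->
  adj_dom ip A (c *: v + v').
Proof.
move=> [w hw] [w' hw']; exists (c *: w + w') => u Du.
by rewrite !(ipDl Hip) !(ipZl Hip) hw // hw'.
Qed.

Lemma adj_is_op (A : op V) : dense ip (dom A) -> is_op (adj A).
Proof.
move=> hd; split.
  split; first by exists 0 => u _; rewrite !(ip0l Hip).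
  by move=> c v v'; apply: adj_dom_lin.
move=> c v v' hv hv'; apply: adj_unique => //; first exact: adj_dom_lin.
move=> u Du; rewrite !(ipDl Hip) !(ipZl Hip) -!adj_spec //.
Qed.


Lemma cvgr_uniq (f g : nat -> R) (a b : R) : (forall n, f n = g n) -> cvgr f a -> cvgr g b -> a = b.
Proof.
move=> h ha hb.
have := @cvgr_zero R (fun n => f n + (-1) * g n) (a + (-1) * b).
have e : forall n, f n + (-1) * g n = 0 by move=> n; rewrite h; ring.
move=> /(_ e (cvgr_add ha (cvgr_scale (-1) hb))) => h2.
by apply/eqP; rewrite -subr_eq0; apply/eqP; rewrite -h2; ring.
Qed.

Lemma op_sub (A : op V) a b : is_op A -> dom A a -> dom A b ->
  dom A (a - b) /\ app A (a - b) = app A a - app A b.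
Proof.
move=> [[D0 Dl] lin] Da Db.
have e : a - b = (-1) *: b + a by rewrite scaleN1r addrC.
split; first by rewrite e; apply: Dl.
by rewrite e lin // scaleN1r addrC.
Qed.

Lemma op_scale (A : op V) c a : is_op A -> dom A a ->
  dom A (c *: a) /\ app A (c *: a) = c *: app A a.
Proof.
move=> [[D0 Dl] lin] Da.
have A0 : app A 0 = 0.
  have h := lin 1 0 0 D0 D0; rewrite !scale1r addr0 in h.
  by apply: (@addrI _ (app A 0)); rewrite addr0 -h.
split; first by rewrite -(addr0 (c *: a)); apply: Dl.
by rewrite -(addr0 (c *: a)) lin // A0 addr0.
Qed.

Lemma ReIm_eq (z1 z2 : R[i]) : complex.Re z1 = complex.Re z2 ->
  complex.Re ('i * z1) = complex.Re ('i * z2) -> z1 = z2.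
Proof.
case: z1 => a b; case: z2 => c d /= -> h; congr (_ +i* _).
by move: h; rewrite !mul0r !mul1r !sub0r => /eqP; rewrite eqr_opp => /eqP.
Qed.

Lemma adj_closed (A : op V) : dense ip (dom A) -> is_op A -> closed_op ip (adj A).
Proof.
move=> hd hA; split; first exact: adj_is_op.
move=> x u w hx cx cw.
have key : forall y, dom A y -> complex.Re (ip u (app A y)) = complex.Re (ip w y).
  move=> y Dy.
  apply: (@cvgr_uniq (fun n => complex.Re (ip (x n) (app A y)))
                    (fun n => complex.Re (ip (app (adj A) (x n)) y))).
  - by move=> n; rewrite (adj_spec (hx n) Dy).
  - exact: (cvg_ipRe Hip cx (cvgV_const Hip (app A y))).
  - exact: (cvg_ipRe Hip cw (cvgV_const Hip y)).
have key2 : forall y, dom A y -> ip u (app A y) = ip w y.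
  move=> y Dy; apply: ReIm_eq; first exact: key.
  have [Diy Aiy] := op_scale 'i hA Dy.
  by rewrite -(ipZr Hip) -Aiy key // (ipZr Hip).
have hu : adj_dom ip A u by exists w.
split => //; apply: adj_unique => //.
Qed.

Lemma closure_ext (A T : op V) (D : V -> Prop) (c : R) :
  (forall x, cauchyV ip x -> exists l, cvgV x l) ->
  closed_op ip A -> is_op T -> subspace D -> subsetV D (dom A) -> subsetV D (dom T) ->
  0 <= c ->
  (forall x, D x -> nrm (app A x) <= c * (nrm (app T x) + nrm x)) ->
  forall (x : nat -> V) u w, (forall n, D (x n)) -> cvgV x u ->
  cvgV (fun n => app T (x n)) w ->
  dom A u /\ cvgV (fun n => app A (x n)) (app A u).
Proof.
move=> hcomp [hA hcl] hT [D0 Dl] DA DT c0 hb x u w hx cx cw.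
have DB : forall a b, D a -> D b -> D (a - b).
  by move=> a b Da Db; rewrite -scaleN1r addrC; apply: Dl.
have cau : cauchyV ip (fun n => app A (x n)).
  move=> e e0.
  have c1 : 0 < 2 * (c + 1) by rewrite mulr_gt0 // ltr_pwDr.
  have [N1 h1] := cvg_cauchy Hip cx (divr_gt0 e0 c1).
  have [N2 h2] := cvg_cauchy Hip cw (divr_gt0 e0 c1).
  exists (maxn N1 N2) => n m /maxnP [n1 n2] /maxnP [m1 m2].
  have [_ <-] := op_sub hA (DA _ (hx n)) (DA _ (hx m)).
  apply: (le_lt_trans (hb _ (DB _ _ (hx n) (hx m)))).
  have [_ eT] := op_sub hT (DT _ (hx n)) (DT _ (hx m)).
  have p1 := h1 n m n1 m1; have p2 := h2 n m n2 m2; rewrite -eT in p2.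
  set a := nrm (app T (x n - x m)) in p2 *; set b := nrm (x n - x m) in p1 *.
  have a0 : 0 <= a := nrm_ge0 _ _; have b0 : 0 <= b := nrm_ge0 _ _.
  have : c * (a + b) <= (c + 1) * (a + b) by apply: ler_wpM2r; [lra|lra].
  move=> q; apply: (le_lt_trans q).
  have q2 : a + b < 2 * (e / (2 * (c + 1)))  by lra.
  have -> : e = (c + 1) * (2 * (e / (2 * (c + 1)))).
    by field; apply/eqP; lra.
  by rewrite ltr_pM2l //; lra.
have [z cz] := hcomp _ cau.
have [Du Au] := hcl x u z (fun n => DA _ (hx n)) cx cz.
by split => //; rewrite Au.
Qed.

End Ops.


Lemma small_inv (R : realType) (d : R) : 0 < d ->
  exists N, forall n, (N <= n)%N -> (n.+1%:R)^-1 < d.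
Proof.
move=> d0; exists (Num.Def.archi_bound (d^-1)) => n hn.
have di : 0 <= d^-1 by rewrite invr_ge0 ltW.
have h1 := archi_boundP di.
have h2 : (Num.Def.archi_bound d^-1)%:R <= n.+1%:R :> R by rewrite ler_nat; apply: leqW.
rewrite invf_plt ?posrE ?ltr0Sn //; exact: lt_le_trans h1 h2.
Qed.

Lemma quad0 (R : realType) (a b : R) : 0 <= b -> (forall t, 0 <= t * a + t ^+ 2 * b) -> a = 0.
Proof.
move=> b0 h.
have b1 : b + 1 != 0 by apply/eqP; lra.
have := h (- a / (b + 1)).
have -> : - a / (b + 1) * a + (- a / (b + 1)) ^+ 2 * b = - (a / (b + 1)) ^+ 2.
  by field.
rewrite oppr_ge0 => h2.
have : (a / (b + 1)) ^+ 2 = 0 by apply/eqP; rewrite eq_le h2 sqr_ge0.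
move/eqP; rewrite sqrf_eq0 mulf_eq0 invr_eq0 (negbTE b1) orbF => /eqP //.
Qed.

Section Riesz.
Variables (R : realType) (V : lmodType R[i]) (ip : V -> V -> R[i]).
Hypothesis Hip : inner_product ip.
Hypothesis Hcomp : forall x, cauchyV ip x -> exists l, cvgV ip x l.
Local Notation nrm := (hnorm ip).
Variable f : V -> R[i].
Hypothesis flin : forall a u u', f (a *: u + u') = a * f u + f u'.
Variable Cb : R.
Hypothesis fb : forall u, complex.Re (f u) <= Cb * nrm u.

Lemma f0 : f 0 = 0.
Proof.
have h := flin 1 0 0; rewrite scale1r addr0 mul1r in h.
by apply: (@addrI _ (f 0)); rewrite addr0 -h.
Qed.

Lemma fZ a u : f (a *: u) = a * f u.
Proof. by rewrite -(addr0 (a *: u)) flin f0 addr0. Qed.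

Lemma fD u u' : f (u + u') = f u + f u'.
Proof. by rewrite -{1}(scale1r u) flin mul1r. Qed.

Lemma fN u : f (- u) = - f u.
Proof. by rewrite -[- u]scaleN1r fZ mulN1r. Qed.

Lemma fB u u' : f (u - u') = f u - f u'.
Proof. by rewrite fD fN. Qed.

Lemma fabs u : `|complex.Re (f u)| <= `|Cb| * nrm u.
Proof.
have n0 := nrm_ge0 ip u.
have h1 := fb u; have h2 := fb (- u).
rewrite fN ReNc (nrmN Hip) in h2.
have h3 : Cb * nrm u <= `|Cb| * nrm u by apply: ler_wpM2r => //; apply: ler_norm.
by rewrite ler_norml; apply/andP; split; lra.
Qed.

Definition J y := nrm y ^+ 2 - 2 * complex.Re (f y).

Lemma J_lb y : - `|Cb| ^+ 2 <= J y.
Proof.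
rewrite /J; have := fabs y; have := nrm_ge0 ip y; have := normr_ge0 Cb.
set a := nrm y; set c := `|Cb|; set r := complex.Re (f y) => h1 h2.
rewrite ler_norml => /andP [h3 h4]; have := sqr_ge0 (a - c); nra.
Qed.

Definition Jset : R -> Prop := fun r => exists y, r = J y.

Lemma Jset_inf : classical_sets.has_inf Jset.
Proof.
split; first by exists (J 0); exists 0.
by exists (- `|Cb| ^+ 2) => r [y ->]; apply: J_lb.
Qed.

Local Notation m := (inf Jset).

Lemma m_le y : m <= J y.
Proof. by apply: (ge_inf (proj2 Jset_inf)); exists y. Qed.

Definition ys n := epsilon (inhabits 0) (fun y => J y < m + (n.+1%:R)^-1).

Lemma ysP n : J (ys n) < m + (n.+1%:R)^-1.
Proof.
rewrite /ys; apply: (epsilon_spec (inhabits 0) (fun y => J y < m + (n.+1%:R)^-1)).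
have ip0 : 0 < (n.+1%:R : R)^-1 by rewrite invr_gt0 ltr0Sn.
have [r [y ->] hy] := inf_adherent ip0 Jset_inf.
by exists y.
Qed.

Lemma nrmZr (h : R) z : nrm (h%:C *: z) ^+ 2 = h ^+ 2 * nrm z ^+ 2.
Proof.
rewrite !(nrm_sq Hip) (ipZl Hip) (ipZr Hip) conjcR. case: (ip z z) => x y /=; ring.
Qed.

Lemma parallel a b :
  nrm (a - b) ^+ 2 = 2 * (J a + J b) - 4 * J ((2^-1)%:C *: (a + b)).
Proof.
rewrite /J nrmZr fZ ReMrC fD ReDc !(nrm_sq Hip) (ipBl Hip) !(ipBr Hip) (ipDl Hip)
  !(ipDr Hip) !ReBc !ReDc (ReC Hip b a).
by field.
Qed.

Lemma ys_cauchy : cauchyV ip ys.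
Proof.
move=> e e0.
have [N hN] := small_inv (divr_gt0 (mulr_gt0 e0 e0) (ltr0Sn R 3)).
exists N => n k hn hk.
have p1 := ysP n; have p2 := ysP k.
have q1 := hN n hn; have q2 := hN k hk.
have q3 := m_le ((2^-1)%:C *: (ys n + ys k)).
have h : nrm (ys n - ys k) ^+ 2 < e * e.
  rewrite parallel.
  move: p1 p2 q1 q2 q3.
  set x1 := (n.+1%:R)^-1; set x2 := (k.+1%:R)^-1; set j1 := J (ys n);
   set j2 := J (ys k); set j3 := J _.
  move=> p1 p2 q1 q2 q3.
  have -> : e * e = 4 * (e * e / 4) by field.
  lra.
have n0 := nrm_ge0 ip (ys n - ys k); nra.
Qed.

Lemma riesz : exists w, forall u, f u = ip w u.
Proof.
have [y cy] := Hcomp ys_cauchy.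
have cJ : cvgr (fun n => J (ys n)) (J y).
  rewrite /J; apply: (@cvgr_ext R (fun n => nrm (ys n) ^+ 2 + (-2) * complex.Re (f (ys n)))).
    by move=> n; ring.
  have -> : nrm y ^+ 2 - 2 * complex.Re (f y) = nrm y ^+ 2 + (-2) * complex.Re (f y) by ring.
  apply: cvgr_add.
    apply: (@cvgr_ext R (fun n => complex.Re (ip (ys n) (ys n)))); first by move=> n; rewrite (nrm_sq Hip).
    by rewrite (nrm_sq Hip); apply: (cvg_ipRe Hip cy cy).
  apply: cvgr_scale => e e0.
  have c0 : 0 < `|Cb| + 1 by rewrite ltr_pwDr // normr_ge0.
  have [N hN] := cy _ (divr_gt0 e0 c0).
  exists N => n hn; rewrite -ReBc -fB.
  apply: le_lt_trans (fabs _) _.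
  have := hN n hn; have := nrm_ge0 ip (ys n - y); have := normr_ge0 Cb.
  set a := nrm _; set c := `|Cb| => h0 h1 h2.
  have : a < e / (c + 1) by [].
  rewrite ltr_pdivlMr // => h3; nra.
have Jy : J y <= m.
  apply/ler_addgt0Pr => e e0.
  have e2 : 0 < e / 2 by rewrite divr_gt0.
  have [N1 h1] := cJ _ e2; have [N2 h2] := small_inv e2.
  have p := ysP (maxn N1 N2).
  have q1 := h1 _ (leq_maxl N1 N2); have q2 := h2 _ (leq_maxr N1 N2).
  move: q1; rewrite ltr_norml => /andP [q1 q1'].
  move: p q2 q1 q1'; move: (J y) (J (ys _)) m ((maxn N1 N2).+1%:R^-1) => a b c d; clear h1 h2; move: e e0 e2 => e _ _; lra.
have key : forall u, complex.Re (ip y u) = complex.Re (f u).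
  move=> u; apply/eqP; rewrite -subr_eq0; apply/eqP.
  suff : 2 * (complex.Re (ip y u) - complex.Re (f u)) = 0.
    by move/eqP; rewrite mulf_eq0 pnatr_eq0 /= => /eqP.
  apply: (@quad0 R _ (nrm u ^+ 2)); first by rewrite exprn_ge0 // nrm_ge0.
  move=> t; have := m_le (y + t%:C *: u).
  have e : J (y + t%:C *: u) = J y + t * (2 * (complex.Re (ip y u) - complex.Re (f u)))
        + t ^+ 2 * nrm u ^+ 2.
    rewrite /J fD fZ ReDc ReMrC !(nrm_sq Hip) !(ipDl Hip) !(ipDr Hip) !(ipZl Hip) !(ipZr Hip)
      conjcR !ReDc !ReMrC (ReC Hip u y); ring.
  rewrite e; move: Jy; set A := t * _; set B := t ^+ 2 * _.
  move: (J y) m A B => a b c d; lra.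
exists y => u; apply: ReIm_eq; first by rewrite key.
by rewrite -(ipZr Hip) -fZ key.
Qed.

End Riesz.

Lemma adj_tot_dom (R : realType) (V : lmodType R[i]) (ip : V -> V -> R[i]) (S : V -> V) :
  inner_product ip -> (forall x, cauchyV ip x -> exists l, cvgV ip x l) ->
  bounded ip S -> forall v, adj_dom ip (tot S) v.
Proof.
move=> Hip Hc [lin [M hM]] v.
have flin : forall a u u', ip v (S (a *: u + u')) = a * ip v (S u) + ip v (S u').
  by move=> a u u'; rewrite lin // (ipDr Hip) (ipZr Hip).
have fb : forall u, complex.Re (ip v (S u)) <= (hnorm ip v * M) * hnorm ip u.
  move=> u; apply: le_trans (CS Hip v (S u)) _.
  by rewrite -mulrA; apply: ler_wpM2l; [apply: nrm_ge0|apply: hM].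
have [w hw] := riesz Hip Hc flin fb.
by exists w => u _.
Qed.


Section Adj.
Variables (R : realType) (V : lmodType R[i]) (ip : V -> V -> R[i]).
Hypothesis Hip : inner_product ip.
Hypothesis Hcomp : forall x, cauchyV ip x -> exists l, cvgV ip x l.
Local Notation nrm := (hnorm ip).
Local Notation adj := (adj ip).

Lemma adj_spec' (A : op V) z s : adj_dom ip A z -> dom A s ->
  ip (app A s) z = ip s (app (adj A) z).
Proof. by move=> hz hs; rewrite (ipC Hip) (adj_spec hz hs) -(ipC Hip). Qed.

Lemma dense_sub (S T : V -> Prop) : dense ip S -> subsetV S T -> dense ip T.
Proof. by move=> hd hs u e e0; have [w [Sw hw]] := hd u e e0; exists w; split => //; apply: hs. Qed.

Lemma dense_all : dense ip (fun _ => True).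
Proof. by move=> u e e0; exists u; split => //; rewrite subrr (nrm0 Hip). Qed.

Lemma bounded_nonneg S : bounded ip S -> exists M, 0 <= M /\ forall u, nrm (S u) <= M * nrm u.
Proof.
move=> [_ [M hM]]; exists `|M|; split; first exact: normr_ge0.
move=> u; apply: le_trans (hM u) _; apply: ler_wpM2r; [exact: nrm_ge0|exact: ler_norm].
Qed.

Lemma lin_add S : bounded ip S -> forall a b, S (a + b) = S a + S b.
Proof. by move=> [lin _] a b; rewrite -{1}(scale1r a) lin // scale1r. Qed.

Lemma lin_0 S : bounded ip S -> S 0 = 0.
Proof.
move=> hS; have h := lin_add hS 0 0; rewrite addr0 in h.
by apply: (@addrI _ (S 0)); rewrite addr0 -h.
Qed.

Lemma lin_opp S : bounded ip S -> forall a, S (- a) = - S a.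
Proof.
move=> hS a; apply/eqP; rewrite -subr_eq0 opprK addrC -lin_add // subrr.
by rewrite lin_0.
Qed.

Lemma lin_sum S (I : Type) (r : seq I) (P : pred I) (f : I -> V) :
  bounded ip S -> S (\sum_(i <- r | P i) f i) = \sum_(i <- r | P i) S (f i).
Proof. by move=> hS; apply: (big_morph _ (lin_add hS) (lin_0 hS)). Qed.

Lemma nrm_sum (I : Type) (r : seq I) (P : pred I) (f : I -> V) :
  nrm (\sum_(i <- r | P i) f i) <= \sum_(i <- r | P i) nrm (f i).
Proof.
elim: r => [|j r IH]; first by rewrite !big_nil (nrm0 Hip).
rewrite !big_cons; case: (P j) => //.
by apply: le_trans (nrmD Hip _ _) _; rewrite lerD2l.
Qed.

Lemma badj_dom S : bounded ip S -> forall v, adj_dom ip (tot S) v.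
Proof. by move=> hS; apply: adj_tot_dom. Qed.

Lemma badj_spec S : bounded ip S -> forall v u, ip v (S u) = ip (app (adj (tot S)) v) u.
Proof. by move=> hS v u; apply: (adj_spec (badj_dom hS v)). Qed.

Lemma badj_spec' S : bounded ip S -> forall u v, ip (S u) v = ip u (app (adj (tot S)) v).
Proof. by move=> hS u v; apply: (adj_spec' (badj_dom hS v)). Qed.

Lemma badj_bounded S : bounded ip S -> bounded ip (app (adj (tot S))).
Proof.
move=> hS; have hop := adj_is_op Hip (A := tot S) dense_all.
split.
  by move=> a u v _ _; case: hop => _ lin; apply: lin; apply: badj_dom.
have [M [M0 hM]] := bounded_nonneg hS.
exists M => v; set w := app (adj (tot S)) v.
have h : nrm w ^+ 2 <= nrm v * (M * nrm w).
  rewrite (nrm_sq Hip) /w -(badj_spec hS).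
  apply: le_trans (CS Hip _ _) _; apply: ler_wpM2l; [exact: nrm_ge0|exact: hM].
have w0 := nrm_ge0 ip w; have v0 := nrm_ge0 ip v.
have [->|wp] := eqVneq (nrm w) 0; first by rewrite mulr_ge0.
have wp' : 0 < nrm w by rewrite lt0r wp.
have : nrm w * nrm w <= nrm w * (M * nrm v) by rewrite -expr2; nra.
by rewrite ler_pM2l.
Qed.

End Adj.


Section Alg.
Variables (R : realType) (V : lmodType R[i]) (ip : V -> V -> R[i]).
Hypothesis Hip : inner_product ip.
Local Notation nrm := (hnorm ip).

Lemma sum_delta_r (I : finType) (P : pred I) (a : I -> V) j v : P j ->
  \sum_(k | P k) ip (a k) (if k == j then v else 0) = ip (a j) v.
Proof.
move=> Pj; rewrite (bigD1 j) //= eqxx big1 ?addr0 // => k /andP [_ kj].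
by rewrite (negbTE kj) (ip0r Hip).
Qed.

Lemma sum_delta_r' (I : finType) (P : pred I) (a : I -> V) j v : P j ->
  \sum_(k | P k) ip (a k) (if j == k then v else 0) = ip (a j) v.
Proof.
move=> Pj; rewrite -(sum_delta_r a v Pj); apply: eq_bigr => k _; by rewrite eq_sym.
Qed.

Lemma sum_delta_l (I : finType) (P : pred I) (b : I -> V) i w : P i ->
  \sum_(k | P k) ip (if k == i then w else 0) (b k) = ip w (b i).
Proof.
move=> Pi; rewrite (bigD1 i) //= eqxx big1 ?addr0 // => k /andP [_ ki].
by rewrite (negbTE ki) (ip0l Hip).
Qed.

Lemma sum_delta_l' (I : finType) (P : pred I) (b : I -> V) i w : P i ->
  \sum_(k | P k) ip (if i == k then w else 0) (b k) = ip w (b i).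
Proof.
move=> Pi; rewrite -(sum_delta_l b w Pi); apply: eq_bigr => k _; by rewrite eq_sym.
Qed.

Lemma swapR (d : nat) (S Sa : 'I_d.+1 -> 'I_d.+1 -> V -> V) (Rx Nx : 'I_d.+1 -> V) :
  (forall i j, i != ord0 -> j != ord0 -> bounded ip (S i j)) ->
  (forall i l, i != ord0 -> l != ord0 -> forall u,
     \sum_(k < d.+1 | k != ord0) S i k (Sa l k u) = if i == l then u else 0) ->
  (forall k, k != ord0 -> Nx k = - \sum_(l < d.+1 | l != ord0) Sa l k (Rx l)) ->
  forall i, i != ord0 -> Rx i = - \sum_(k < d.+1 | k != ord0) S i k (Nx k).
Proof.
move=> hS hU hN i hi.
have e : forall k, k != ord0 ->
    S i k (Nx k) = - \sum_(l < d.+1 | l != ord0) S i k (Sa l k (Rx l)).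
  by move=> k hk; rewrite hN // (lin_opp (hS i k hi hk)) (lin_sum _ _ _ (hS i k hi hk)).
rewrite (eq_bigr _ e) sumrN opprK exchange_big /=.
rewrite (eq_bigr (fun l => if i == l then Rx l else 0)); last first.
  by move=> l hl; apply: hU.
rewrite (bigD1 i) //= eqxx big1 ?addr0 // => l /andP [_ li].
by rewrite eq_sym (negbTE li).
Qed.

Lemma rc_add (a b : R) : (a + b)%:C = a%:C + b%:C :> R[i].
Proof. by apply/eqP; rewrite eq_complex /= addr0 !eqxx. Qed.

Lemma rc_sum (I : Type) (r : seq I) (P : pred I) (f : I -> R) :
  (\sum_(i <- r | P i) f i)%:C = \sum_(i <- r | P i) (f i)%:C :> R[i].
Proof. by apply: (big_morph _ rc_add). Qed.

Lemma ip_nrm w : ip w w = (nrm w ^+ 2)%:C.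
Proof. by rewrite (nrm_sq Hip) -(ipRe Hip). Qed.

Lemma zJ (z : R[i]) : conjc z + z = (2 * complex.Re z)%:C.
Proof. by case: z => a b /=; congr (_ +i* _); ring. Qed.

Lemma id00 (I : Type) (r : seq I) (P : pred I) (f : I -> V) x y :
  2 * complex.Re (ip y x) = - \sum_(k <- r | P k) nrm (f k) ^+ 2 ->
  ip x y + ip y x + \sum_(k <- r | P k) ip (f k) (f k) = 0.
Proof.
move=> h; rewrite (ipC Hip y x) zJ h.
rewrite (eq_bigr (fun k => (nrm (f k) ^+ 2)%:C)); last by move=> k _; apply: ip_nrm.
by rewrite -rc_sum -rc_add addNr.
Qed.

Lemma ipBB a b c e : ip (a - b) (c - e) = ip a c - ip a e - ip b c + ip b e.
Proof. rewrite (ipBl Hip) !(ipBr Hip); ring. Qed.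

End Alg.


Section Helpers.
Variables (R : realType) (V : lmodType R[i]) (ip : V -> V -> R[i]).
Hypothesis Hip : inner_product ip.
Local Notation nrm := (hnorm ip).

Lemma bound_from_dis (I : finType) (P : pred I) (g : I -> V) x y k : P k ->
  2 * complex.Re (ip y x) = - \sum_(l | P l) nrm (g l) ^+ 2 ->
  nrm (g k) <= nrm y + nrm x.
Proof.
move=> Pk h.
have h1 : nrm (g k) ^+ 2 <= \sum_(l | P l) nrm (g l) ^+ 2.
  rewrite (bigD1 k) //= lerDl; apply: sumr_ge0 => l _; exact: sqr_ge0.
have h2 := CSabs Hip y x.
have p1 := nrm_ge0 ip y; have p2 := nrm_ge0 ip x; have p3 := nrm_ge0 ip (g k).
have h4 : nrm (g k) ^+ 2 <= (nrm y + nrm x) ^+ 2.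
  move: h1 h2 h; set s := \sum_(l | P l) _; set r := complex.Re _.
  rewrite ler_norml => h1 /andP [h2 h3] h; nra.
by move: h4; rewrite ler_sqr ?nnegrE ?addr_ge0.
Qed.

Lemma bound_comb (I : finType) (P : pred I) (T : I -> V -> V) (g : I -> V) (M : I -> R) B :
  (forall l, P l -> nrm (T l (g l)) <= M l * nrm (g l)) -> (forall l, P l -> 0 <= M l) ->
  (forall l, P l -> nrm (g l) <= B) ->
  nrm (- \sum_(l | P l) T l (g l)) <= (\sum_(l | P l) M l) * B.
Proof.
move=> h1 h2 h3; rewrite (nrmN Hip).
apply: le_trans (nrm_sum Hip _ _ _) _.
rewrite mulr_suml; apply: ler_sum => l Pl.
apply: le_trans (h1 l Pl) _; apply: ler_wpM2l; [exact: h2|exact: h3].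
Qed.

Lemma dis_ext (I : Type) (r : seq I) (P : pred I) (A : op V) (g : I -> op V) x u :
  cvgV ip x u -> cvgV ip (fun n => app A (x n)) (app A u) ->
  (forall k, P k -> cvgV ip (fun n => app (g k) (x n)) (app (g k) u)) ->
  (forall n, 2 * complex.Re (ip (app A (x n)) (x n))
       = - \sum_(k <- r | P k) nrm (app (g k) (x n)) ^+ 2) ->
  2 * complex.Re (ip (app A u) u) = - \sum_(k <- r | P k) nrm (app (g k) u) ^+ 2.
Proof.
move=> cx cA cg h.
apply/eqP; rewrite -subr_eq0 opprK; apply/eqP.
apply: (@cvgr_zero R (fun n => 2 * complex.Re (ip (app A (x n)) (x n))
   + \sum_(k <- r | P k) nrm (app (g k) (x n)) ^+ 2)).
  by move=> n; rewrite h addNr.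
apply: cvgr_add; first exact: (cvgr_scale 2 (cvg_ipRe Hip cA cx)).
apply: cvgr_sum => k Pk.
apply: (@cvgr_ext R (fun n => complex.Re (ip (app (g k) (x n)) (app (g k) (x n))))).
  by move=> n; rewrite (nrm_sq Hip).
by rewrite (nrm_sq Hip); apply: (cvg_ipRe Hip (cg k Pk) (cg k Pk)).
Qed.

End Helpers.


Unset Implicit Arguments. Set Strict Implicit. Set Printing Implicit Defensive.

Theorem mainTheorem1
  (R : realType) (V : lmodType R[i]) (ip : V -> V -> R[i])
  (d : nat) (F : 'I_d.+1 -> 'I_d.+1 -> op V) (Sm : 'I_d.+1 -> 'I_d.+1 -> V -> V)
  (D Dt : V -> Prop) (C : op V) (delta b1 b2 : R) :
  is_hilbert ip ->
  (0 < d)%N ->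
  (* (i) *)
  (forall i j, closed_op ip (F i j)) ->
  (* (ii) *)
  (forall i j, i != ord0 -> j != ord0 ->
     [/\ bounded ip (Sm i j), (forall u, dom (F i j) u) &
         forall u, app (F i j) u = Sm i j u - (if i == j then u else 0)]) ->
  (forall i j, i != ord0 -> j != ord0 -> forall u,
     \sum_(k < d.+1 | k != ord0) app (adj ip (tot (Sm k i))) (Sm k j u)
       = (if i == j then u else 0)) ->
  (forall i j, i != ord0 -> j != ord0 -> forall u,
     \sum_(k < d.+1 | k != ord0) Sm i k (app (adj ip (tot (Sm j k))) u)
       = (if i == j then u else 0)) ->
  (* (iii) *)
  subspace D -> dense ip D ->
  is_core ip D (F ord0 ord0) ->
  (forall i, i != ord0 -> is_core ip D (F i ord0) /\ is_core ip D (F ord0 i)) ->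
  subspace Dt -> dense ip Dt ->
  is_core ip Dt (adj ip (F ord0 ord0)) ->
  (forall i, i != ord0 ->
     is_core ip Dt (adj ip (F i ord0)) /\ is_core ip Dt (adj ip (F ord0 i))) ->
  (* (iv) *)
  (forall i, i != ord0 ->
     [/\ subsetV (fun u => D u \/ Dt u) (dom (adj ip (F ord0 i))),
         subsetV (fun u => D u \/ Dt u) (dom (F i ord0)) &
         subsetV (dom (F ord0 ord0)) (dom (F ord0 i))]) ->
  (* (v) *)
  (forall k i, k != ord0 -> i != ord0 -> forall u,
     dom (F ord0 ord0) u -> dom (adj ip (F k ord0)) (Sm k i u)) ->
  (* (vi) *)
  contraction_generator ip (F ord0 ord0) ->
  contraction_generator ip (adj ip (F ord0 ord0)) ->
  (forall u, D u ->
     2 * complex.Re (ip (app (F ord0 ord0) u) u)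
       = - \sum_(k < d.+1 | k != ord0) hnorm ip (app (F k ord0) u) ^+ 2) ->
  (forall v, Dt v ->
     2 * complex.Re (ip (app (adj ip (F ord0 ord0)) v) v)
       = - \sum_(k < d.+1 | k != ord0) hnorm ip (app (adj ip (F ord0 k)) v) ^+ 2) ->
  (* (vii) *)
  (forall i, i != ord0 -> forall u, D u \/ Dt u ->
     app (adj ip (F ord0 i)) u
       = - \sum_(k < d.+1 | k != ord0) app (adj ip (tot (Sm k i))) (app (F k ord0) u)) ->
  (* (viii) *)
  pos_self_adjoint ip C -> 0 < delta -> 0 <= b1 -> 0 <= b2 ->
  (exists B, is_sqrt ip B C /\
     subsetV (dom B) (fun u => forall i j, dom (F i j) u)) ->
  (forall eps : R, 0 < eps -> eps < delta ->
     exists (De : V -> Prop) (B : op V),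
     [/\ subspace De /\ dense ip De, subsetV De Dt,
         is_sqrt ip B (Ceps C eps),
         (forall v, De v -> Dt (app B v)) &
         forall i j, exists M : R, forall v, De v ->
           hnorm ip (app (adj ip (F i j)) (app B v)) <= M * hnorm ip v]) ->
  (forall eps : R, 0 < eps -> eps < delta -> forall u : 'I_d.+1 -> V,
     (forall i i' j', dom (F i' j') (u i)) ->
     \sum_(i < d.+1) \sum_(j < d.+1)
        (ip (u i) (app (Ceps C eps) (app (F i j) (u j)))
         + ip (app (F j i) (u i)) (app (Ceps C eps) (u j))
         + \sum_(k < d.+1 | k != ord0)
             ip (app (F k i) (u i)) (app (Ceps C eps) (app (F k j) (u j))))
     <= \sum_(i < d.+1)
          (b1%:C * ip (u i) (app (Ceps C eps) (u i)) + (b2 * hnorm ip (u i) ^+ 2)%:C)) ->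
  (* ---- conclusions ---- *)
  [/\
   (* (1) *)
   (forall k, k != ord0 ->
      subsetV (fun u => dom (F ord0 ord0) u \/ dom (adj ip (F ord0 ord0)) u)
              (dom (F k ord0)) /\
      subsetV (fun u => dom (F ord0 ord0) u \/ dom (adj ip (F ord0 ord0)) u)
              (dom (adj ip (F ord0 k)))),
   (* (2) *)
   [/\ (forall u, (forall i j, dom (F i j) u) <-> dom (F ord0 ord0) u),
       (forall u, dom (F ord0 ord0) u ->
          2 * complex.Re (ip (app (F ord0 ord0) u) u)
            = - \sum_(k < d.+1 | k != ord0) hnorm ip (app (F k ord0) u) ^+ 2) &
       (forall v, dom (adj ip (F ord0 ord0)) v ->
          2 * complex.Re (ip (app (adj ip (F ord0 ord0)) v) v)
            = - \sum_(k < d.+1 | k != ord0) hnorm ip (app (adj ip (F ord0 k)) v) ^+ 2)],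
   (* (3) *)
   (forall u i, dom (F ord0 ord0) u \/ dom (adj ip (F ord0 ord0)) u -> i != ord0 ->
      app (adj ip (F ord0 i)) u
        = - \sum_(k < d.+1 | k != ord0) app (adj ip (tot (Sm k i))) (app (F k ord0) u)
      /\ app (F i ord0) u
        = - \sum_(k < d.+1 | k != ord0) Sm i k (app (adj ip (F ord0 k)) u)),
   (* (4) *)
   (forall u i, dom (F ord0 ord0) u -> i != ord0 ->
      app (F ord0 i) u
        = - \sum_(k < d.+1 | k != ord0) app (adj ip (F k ord0)) (Sm k i u)) &
   (* (5) *)
   (forall u v : 'I_d.+1 -> V,
      (forall i i' j', dom (F i' j') (u i)) -> (forall i, Dt (v i)) ->
      \sum_(i < d.+1) \sum_(j < d.+1)
        (ip (u i) (app (F i j) (u j)) + ip (app (F j i) (u i)) (u j)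
         + \sum_(k < d.+1 | k != ord0) ip (app (F k i) (u i)) (app (F k j) (u j))) = 0
      /\
      \sum_(i < d.+1) \sum_(j < d.+1)
        (ip (v i) (app (adj ip (F j i)) (v j)) + ip (app (adj ip (F i j)) (v i)) (v j)
         + \sum_(k < d.+1 | k != ord0)
             ip (app (adj ip (F i k)) (v i)) (app (adj ip (F j k)) (v j))) = 0)].
Proof.
move=> [Hip Hcomp _] _ Hcl HS Hu1 Hu2 HDs HDd HcK HcRN HDts HDtd HcKs HcRNs Hiv Hv _ _
  HdisD HdisDt Hvii _ _ _ _ _ _ _.
have Sb : forall i j, i != ord0 -> j != ord0 -> bounded ip (Sm i j).
  by move=> i j hi hj; case: (HS i j hi hj).
have SAb : forall i j, i != ord0 -> j != ord0 -> bounded ip (app (adj ip (tot (Sm i j)))).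
  by move=> i j hi hj; apply: badj_bounded => //; apply: Sb.
have SAl : forall i j, i != ord0 -> j != ord0 -> forall v u,
    ip v (Sm i j u) = ip (app (adj ip (tot (Sm i j))) v) u.
  by move=> i j hi hj; apply: badj_spec => //; apply: Sb.
have SAr : forall i j, i != ord0 -> j != ord0 -> forall u v,
    ip (Sm i j u) v = ip u (app (adj ip (tot (Sm i j))) v).
  by move=> i j hi hj; apply: badj_spec' => //; apply: Sb.
pose MS i j := epsilon (inhabits (0 : R))
  (fun M => 0 <= M /\ forall u, hnorm ip (Sm i j u) <= M * hnorm ip u).
pose MA i j := epsilon (inhabits (0 : R))
  (fun M => 0 <= M /\ forall u, hnorm ip (app (adj ip (tot (Sm i j))) u) <= M * hnorm ip u).
have MSp : forall i j, i != ord0 -> j != ord0 ->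
    0 <= MS i j /\ forall u, hnorm ip (Sm i j u) <= MS i j * hnorm ip u.
  move=> i j hi hj; rewrite /MS.
  exact: (epsilon_spec (inhabits 0) _ (bounded_nonneg (Sb i j hi hj))).
have MAp : forall i j, i != ord0 -> j != ord0 ->
    0 <= MA i j /\ forall u, hnorm ip (app (adj ip (tot (Sm i j))) u) <= MA i j * hnorm ip u.
  move=> i j hi hj; rewrite /MA.
  exact: (epsilon_spec (inhabits 0) _ (bounded_nonneg (SAb i j hi hj))).
have opF : forall i j, is_op (F i j) by move=> i j; case: (Hcl i j).
have DK : subsetV D (dom (F ord0 ord0)) by case: HcK.
have DtKs : subsetV Dt (dom (adj ip (F ord0 ord0))) by case: HcKs.
have densK : dense ip (dom (F ord0 ord0)) by apply: dense_sub DK.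
have DR : forall k, k != ord0 -> subsetV D (dom (F k ord0)) by move=> k hk; case: (HcRN k hk) => [[]].
have DN : forall k, k != ord0 -> subsetV D (dom (F ord0 k)) by move=> k hk; case: (HcRN k hk) => _ [].
have DtRs : forall k, k != ord0 -> subsetV Dt (dom (adj ip (F k ord0))).
  by move=> k hk; case: (HcRNs k hk) => [[]].
have DtNs : forall k, k != ord0 -> subsetV Dt (dom (adj ip (F ord0 k))).
  by move=> k hk; case: (HcRNs k hk) => _ [].
have DtR : forall k, k != ord0 -> subsetV Dt (dom (F k ord0)).
  by move=> k hk x hx; case: (Hiv k hk) => _ h _; apply: h; right.
have DNs : forall k, k != ord0 -> subsetV D (dom (adj ip (F ord0 k))).
  by move=> k hk x hx; case: (Hiv k hk) => h _ _; apply: h; left.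
have DtNs' : forall k, k != ord0 -> subsetV Dt (dom (adj ip (F ord0 k))).
  by move=> k hk x hx; case: (Hiv k hk) => h _ _; apply: h; right.
have clNs : forall k, k != ord0 -> closed_op ip (adj ip (F ord0 k)).
  by move=> k hk; apply: adj_closed => //; apply: dense_sub (DN k hk).
have opKs : is_op (adj ip (F ord0 ord0)) by apply: adj_is_op.
have swapD : forall x, D x \/ Dt x -> forall i, i != ord0 ->
    app (F i ord0) x = - \sum_(k < d.+1 | k != ord0) Sm i k (app (adj ip (F ord0 k)) x).
  move=> x hx; apply: (swapR (Sa := fun l k => app (adj ip (tot (Sm l k))))).
  - exact: Sb.
  - by move=> i l hi hl u; apply: Hu2.
  - by move=> k hk; apply: Hvii.
have bRD : forall k, k != ord0 -> forall x, D x ->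
    hnorm ip (app (F k ord0) x) <= 1 * (hnorm ip (app (F ord0 ord0) x) + hnorm ip x).
  move=> k hk x hx; rewrite mul1r.
  exact: (bound_from_dis Hip (g := fun l => app (F l ord0) x) hk (HdisD x hx)).
have bNsDt : forall k, k != ord0 -> forall x, Dt x ->
    hnorm ip (app (adj ip (F ord0 k)) x)
      <= 1 * (hnorm ip (app (adj ip (F ord0 ord0)) x) + hnorm ip x).
  move=> k hk x hx; rewrite mul1r.
  exact: (bound_from_dis Hip (g := fun l => app (adj ip (F ord0 l)) x) hk (HdisDt x hx)).
have bNsD : forall k, k != ord0 -> forall x, D x ->
    hnorm ip (app (adj ip (F ord0 k)) x)
      <= (\sum_(l < d.+1 | l != ord0) MA l k) * (hnorm ip (app (F ord0 ord0) x) + hnorm ip x).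
  move=> k hk x hx; rewrite (Hvii k hk x (or_introl hx)).
  apply: (bound_comb Hip (T := fun l => app (adj ip (tot (Sm l k))))).
  - by move=> l hl; apply: (MAp l k hl hk).2.
  - by move=> l hl; apply: (MAp l k hl hk).1.
  - by move=> l hl; have := bRD l hl x hx; rewrite mul1r.
have bRDt : forall k, k != ord0 -> forall x, Dt x ->
    hnorm ip (app (F k ord0) x)
      <= (\sum_(l < d.+1 | l != ord0) MS k l) *
         (hnorm ip (app (adj ip (F ord0 ord0)) x) + hnorm ip x).
  move=> k hk x hx; rewrite (swapD x (or_intror hx) k hk).
  apply: (bound_comb Hip (T := fun l => Sm k l)).
  - by move=> l hl; apply: (MSp k l hk hl).2.
  - by move=> l hl; apply: (MSp k l hk hl).1.
  - by move=> l hl; have := bNsDt l hl x hx; rewrite mul1r.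
have sMA : forall k, k != ord0 -> 0 <= \sum_(l < d.+1 | l != ord0) MA l k.
  by move=> k hk; apply: sumr_ge0 => l hl; case: (MAp l k hl hk).
have sMS : forall k, k != ord0 -> 0 <= \sum_(l < d.+1 | l != ord0) MS k l.
  by move=> k hk; apply: sumr_ge0 => l hl; case: (MSp k l hk hl).
have apK : forall u, dom (F ord0 ord0) u -> exists x : nat -> V,
   [/\ forall n, D (x n), cvgV ip x u,
       cvgV ip (fun n => app (F ord0 ord0) (x n)) (app (F ord0 ord0) u) &
       forall k, k != ord0 ->
         (dom (F k ord0) u /\ cvgV ip (fun n => app (F k ord0) (x n)) (app (F k ord0) u)) /\
         (dom (adj ip (F ord0 k)) u /\
          cvgV ip (fun n => app (adj ip (F ord0 k)) (x n)) (app (adj ip (F ord0 k)) u))].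
  move=> u Du; have [_ hc] := HcK; have [x [hx cx cK]] := hc u Du.
  exists x; split => // k hk; split.
    exact: (closure_ext Hip Hcomp (Hcl k ord0) (opF ord0 ord0) HDs (DR k hk) DK ler01
             (bRD k hk) hx cx cK).
  exact: (closure_ext Hip Hcomp (clNs k hk) (opF ord0 ord0) HDs (DNs k hk) DK (sMA k hk)
             (bNsD k hk) hx cx cK).
have apKs : forall u, dom (adj ip (F ord0 ord0)) u -> exists x : nat -> V,
   [/\ forall n, Dt (x n), cvgV ip x u,
       cvgV ip (fun n => app (adj ip (F ord0 ord0)) (x n)) (app (adj ip (F ord0 ord0)) u) &
       forall k, k != ord0 ->
         (dom (F k ord0) u /\ cvgV ip (fun n => app (F k ord0) (x n)) (app (F k ord0) u)) /\
         (dom (adj ip (F ord0 k)) u /\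
          cvgV ip (fun n => app (adj ip (F ord0 k)) (x n)) (app (adj ip (F ord0 k)) u))].
  move=> u Du; have [_ hc] := HcKs; have [x [hx cx cK]] := hc u Du.
  exists x; split => // k hk; split.
    exact: (closure_ext Hip Hcomp (Hcl k ord0) opKs HDts (DtR k hk) DtKs (sMS k hk)
             (bRDt k hk) hx cx cK).
  exact: (closure_ext Hip Hcomp (clNs k hk) opKs HDts (DtNs' k hk) DtKs ler01
             (bNsDt k hk) hx cx cK).
have c1 : forall k, k != ord0 ->
    subsetV (fun u => dom (F ord0 ord0) u \/ dom (adj ip (F ord0 ord0)) u) (dom (F k ord0)) /\
    subsetV (fun u => dom (F ord0 ord0) u \/ dom (adj ip (F ord0 ord0)) u)
            (dom (adj ip (F ord0 k))).
  move=> k hk; split => u [Du|Du].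
  - by have [x [_ _ _ h]] := apK u Du; case: (h k hk) => [[]].
  - by have [x [_ _ _ h]] := apKs u Du; case: (h k hk) => [[]].
  - by have [x [_ _ _ h]] := apK u Du; case: (h k hk) => _ [].
  - by have [x [_ _ _ h]] := apKs u Du; case: (h k hk) => _ [].
have c2a : forall u, (forall i j, dom (F i j) u) <-> dom (F ord0 ord0) u.
  move=> u; split; first by move=> h; apply: h.
  move=> Du i j.
  have [->|hi] := eqVneq i ord0; have [->|hj] := eqVneq j ord0 => //.
  - by case: (Hiv j hj) => _ _; apply.
  - by case: (c1 i hi) => h _; apply: h; left.
  - by case: (HS i j hi hj).
have c2b : forall u, dom (F ord0 ord0) u ->
    2 * complex.Re (ip (app (F ord0 ord0) u) u)
      = - \sum_(k < d.+1 | k != ord0) hnorm ip (app (F k ord0) u) ^+ 2.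
  move=> u Du; have [x [hx cx cK hk]] := apK u Du.
  apply: (dis_ext Hip (g := fun k => F k ord0) cx cK).
    by move=> k hk'; case: (hk k hk') => [[]].
  by move=> n; apply: HdisD.
have c2c : forall v, dom (adj ip (F ord0 ord0)) v ->
    2 * complex.Re (ip (app (adj ip (F ord0 ord0)) v) v)
      = - \sum_(k < d.+1 | k != ord0) hnorm ip (app (adj ip (F ord0 k)) v) ^+ 2.
  move=> u Du; have [x [hx cx cK hk]] := apKs u Du.
  apply: (dis_ext Hip (g := fun k => adj ip (F ord0 k)) cx cK).
    by move=> k hk'; case: (hk k hk') => _ [].
  by move=> n; apply: HdisDt.
have c3a : forall u, dom (F ord0 ord0) u \/ dom (adj ip (F ord0 ord0)) u ->
    forall i, i != ord0 ->
    app (adj ip (F ord0 i)) u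
      = - \sum_(k < d.+1 | k != ord0) app (adj ip (tot (Sm k i))) (app (F k ord0) u).
  move=> u hu i hi.
  have gen : forall x : nat -> V, (forall n, D (x n) \/ Dt (x n)) ->
      (forall k, k != ord0 -> cvgV ip (fun n => app (F k ord0) (x n)) (app (F k ord0) u)) ->
      cvgV ip (fun n => app (adj ip (F ord0 i)) (x n)) (app (adj ip (F ord0 i)) u) ->
      app (adj ip (F ord0 i)) u
        = - \sum_(k < d.+1 | k != ord0) app (adj ip (tot (Sm k i))) (app (F k ord0) u).
    move=> x hx cR cN.
    apply: (cvgV_uniq Hip (x := fun n => app (adj ip (F ord0 i)) (x n))) => //.
    apply: (cvgV_ext (x := fun n => - \sum_(k < d.+1 | k != ord0)
               app (adj ip (tot (Sm k i))) (app (F k ord0) (x n)))).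
      by move=> n; rewrite Hvii.
    apply: (cvgV_opp Hip); apply: (cvgV_sum Hip) => k hk.
    exact: (cvgV_bounded (x := fun n => app (F k ord0) (x n)) (SAb k i hk hi) (cR k hk)).
  case: hu => Du.
    have [x [hx cx _ h]] := apK u Du.
    apply: (gen x) => [n|k hk|]; [by left|by case: (h k hk) => [[]]|by case: (h i hi) => _ []].
  have [x [hx cx _ h]] := apKs u Du.
  apply: (gen x) => [n|k hk|]; [by right|by case: (h k hk) => [[]]|by case: (h i hi) => _ []].
have c3b : forall u, dom (F ord0 ord0) u \/ dom (adj ip (F ord0 ord0)) u ->
    forall i, i != ord0 ->
    app (F i ord0) u = - \sum_(k < d.+1 | k != ord0) Sm i k (app (adj ip (F ord0 k)) u).
  move=> u hu; apply: (swapR (Sa := fun l k => app (adj ip (tot (Sm l k))))).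
  - exact: Sb.
  - by move=> i l hi hl w; apply: Hu2.
  - by move=> k hk; apply: c3a.
have c4 : forall u i, dom (F ord0 ord0) u -> i != ord0 ->
    app (F ord0 i) u
      = - \sum_(k < d.+1 | k != ord0) app (adj ip (F k ord0)) (Sm k i u).
  move=> u i Du hi; apply: (eq_dense Hip HDtd) => s Ds.
  have Niu : dom (F ord0 i) u by case: (Hiv i hi) => _ _; apply.
  rewrite (adj_spec (DtNs i hi s Ds) Niu) (Hvii i hi s (or_intror Ds)).
  rewrite (ipNl Hip) (ipNr Hip) (ip_suml Hip) (ip_sumr Hip); congr (- _).
  apply: eq_bigr => k hk.
  rewrite -(SAl k i hk hi).
  exact: (adj_spec' Hip (Hv k i hk hi u Du) (DtR k hk s Ds)).
have Fij : forall i j, i != ord0 -> j != ord0 -> forall w,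
    app (F i j) w = Sm i j w - (if i == j then w else 0).
  by move=> i j hi hj; case: (HS i j hi hj).
have adjF : forall i j, i != ord0 -> j != ord0 -> forall w,
    app (adj ip (F i j)) w = app (adj ip (tot (Sm i j))) w - (if i == j then w else 0).
  move=> i j hi hj w.
  have dF : forall u, dom (F i j) u by case: (HS i j hi hj).
  have densF : dense ip (dom (F i j)) by apply: (dense_sub (dense_all Hip)) => u _; apply: dF.
  have key : forall u, dom (F i j) u -> ip w (app (F i j) u)
      = ip (app (adj ip (tot (Sm i j))) w - (if i == j then w else 0)) u.
    move=> u _; rewrite Fij // (ipBr Hip) (ipBl Hip) (SAl i j hi hj); congr (_ - _).
    by case: (i == j); rewrite ?(ip0r Hip) ?(ip0l Hip).
  by apply: (adj_unique Hip densF _ key); eexists; apply: key.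
have domR : forall a k, dom (F ord0 ord0) a -> k != ord0 -> dom (F k ord0) a.
  by move=> a k ha hk; case: (c1 k hk) => h _; apply: h; left.
have T0j : forall a b j, dom (F ord0 ord0) a -> dom (F ord0 ord0) b -> j != ord0 ->
    ip a (app (F ord0 j) b) + ip (app (F j ord0) a) b
    + \sum_(k < d.+1 | k != ord0) ip (app (F k ord0) a) (app (F k j) b) = 0.
  move=> a b j ha hb hj.
  rewrite (c4 b j hb hj) (ipNr Hip) (ip_sumr Hip).
  have e1 : \sum_(k < d.+1 | k != ord0) ip a (app (adj ip (F k ord0)) (Sm k j b))
      = \sum_(k < d.+1 | k != ord0) ip (app (F k ord0) a) (Sm k j b).
    apply: eq_bigr => k hk.
    by rewrite (adj_spec' Hip (Hv k j hk hj b hb) (domR a k ha hk)).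
  have e2 : \sum_(k < d.+1 | k != ord0) ip (app (F k ord0) a) (app (F k j) b)
      = \sum_(k < d.+1 | k != ord0) ip (app (F k ord0) a) (Sm k j b)
        - ip (app (F j ord0) a) b.
    rewrite (eq_bigr (fun k => ip (app (F k ord0) a) (Sm k j b)
       - ip (app (F k ord0) a) (if k == j then b else 0))); last first.
      by move=> k hk; rewrite (Fij k j hk hj) (ipBr Hip).
    by rewrite sumrB; congr (_ - _); apply: (sum_delta_r Hip).
  rewrite e1 e2; ring.
have Ti0 : forall a b i, dom (F ord0 ord0) a -> dom (F ord0 ord0) b -> i != ord0 ->
    ip a (app (F i ord0) b) + ip (app (F ord0 i) a) b
    + \sum_(k < d.+1 | k != ord0) ip (app (F k i) a) (app (F k ord0) b) = 0.
  move=> a b i ha hb hi.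
  rewrite (c4 a i ha hi) (ipNl Hip) (ip_suml Hip).
  have e1 : \sum_(k < d.+1 | k != ord0) ip (app (adj ip (F k ord0)) (Sm k i a)) b
      = \sum_(k < d.+1 | k != ord0) ip (Sm k i a) (app (F k ord0) b).
    apply: eq_bigr => k hk.
    by rewrite (adj_spec (Hv k i hk hi a ha) (domR b k hb hk)).
  have e2 : \sum_(k < d.+1 | k != ord0) ip (app (F k i) a) (app (F k ord0) b)
      = \sum_(k < d.+1 | k != ord0) ip (Sm k i a) (app (F k ord0) b)
        - ip a (app (F i ord0) b).
    rewrite (eq_bigr (fun k => ip (Sm k i a) (app (F k ord0) b)
       - ip (if k == i then a else 0) (app (F k ord0) b))); last first.
      by move=> k hk; rewrite (Fij k i hk hi) (ipBl Hip).
    by rewrite sumrB; congr (_ - _); apply: (sum_delta_l Hip).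
  rewrite e1 e2; ring.
have Tij : forall a b i j, i != ord0 -> j != ord0 ->
    ip a (app (F i j) b) + ip (app (F j i) a) b
    + \sum_(k < d.+1 | k != ord0) ip (app (F k i) a) (app (F k j) b) = 0.
  move=> a b i j hi hj.
  have e : \sum_(k < d.+1 | k != ord0) ip (app (F k i) a) (app (F k j) b)
     = \sum_(k < d.+1 | k != ord0) ip (Sm k i a) (Sm k j b)
       - \sum_(k < d.+1 | k != ord0) ip (Sm k i a) (if k == j then b else 0)
       - \sum_(k < d.+1 | k != ord0) ip (if k == i then a else 0) (Sm k j b)
       + \sum_(k < d.+1 | k != ord0) ip (if k == i then a else 0) (if k == j then b else 0).
    rewrite -!sumrB -big_split /=.
    by apply: eq_bigr => k hk; rewrite !Fij // (ipBB Hip).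
  have e1 : \sum_(k < d.+1 | k != ord0) ip (Sm k i a) (Sm k j b)
      = ip a (if i == j then b else 0).
    rewrite -(Hu1 i j hi hj b) (ip_sumr Hip).
    by apply: eq_bigr => k hk; rewrite (SAr k i hk hi).
  have e2 : \sum_(k < d.+1 | k != ord0) ip (Sm k i a) (if k == j then b else 0)
      = ip (Sm j i a) b by apply: (sum_delta_r Hip).
  have e3 : \sum_(k < d.+1 | k != ord0) ip (if k == i then a else 0) (Sm k j b)
      = ip a (Sm i j b) by apply: (sum_delta_l Hip).
  have e4 : \sum_(k < d.+1 | k != ord0) ip (if k == i then a else 0) (if k == j then b else 0)
      = ip a (if i == j then b else 0)
    by apply: (sum_delta_l Hip (fun k => if k == j then b else 0)).
  rewrite e e1 e2 e3 e4.
  rewrite !Fij // (ipBr Hip) (ipBl Hip).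
  have hd : ip (if j == i then a else 0) b = ip a (if i == j then b else 0).
    by rewrite eq_sym; case: eqP => _; rewrite ?(ip0r Hip) ?(ip0l Hip).
  rewrite hd; ring.
have S0j : forall a b j, Dt a -> Dt b -> j != ord0 ->
    ip a (app (adj ip (F j ord0)) b) + ip (app (adj ip (F ord0 j)) a) b
    + \sum_(k < d.+1 | k != ord0) ip (app (adj ip (F ord0 k)) a) (app (adj ip (F j k)) b) = 0.
  move=> a b j ha hb hj.
  rewrite -(adj_spec' Hip (DtRs j hj b hb) (DtR j hj a ha)).
  rewrite (swapD a (or_intror ha) j hj) (ipNl Hip) (ip_suml Hip).
  have e1 : \sum_(k < d.+1 | k != ord0) ip (Sm j k (app (adj ip (F ord0 k)) a)) b
      = \sum_(k < d.+1 | k != ord0) ip (app (adj ip (F ord0 k)) a) (app (adj ip (tot (Sm j k))) b).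
    by apply: eq_bigr => k hk; rewrite (SAr j k hj hk).
  have e2 : \sum_(k < d.+1 | k != ord0) ip (app (adj ip (F ord0 k)) a) (app (adj ip (F j k)) b)
      = \sum_(k < d.+1 | k != ord0) ip (app (adj ip (F ord0 k)) a) (app (adj ip (tot (Sm j k))) b)
        - ip (app (adj ip (F ord0 j)) a) b.
    rewrite (eq_bigr (fun k => ip (app (adj ip (F ord0 k)) a) (app (adj ip (tot (Sm j k))) b)
       - ip (app (adj ip (F ord0 k)) a) (if j == k then b else 0))); last first.
      by move=> k hk; rewrite (adjF j k hj hk) (ipBr Hip).
    by rewrite sumrB; congr (_ - _); apply: (sum_delta_r' Hip).
  rewrite e1 e2; ring.
have Si0 : forall a b i, Dt a -> Dt b -> i != ord0 ->
    ip a (app (adj ip (F ord0 i)) b) + ip (app (adj ip (F i ord0)) a) b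
    + \sum_(k < d.+1 | k != ord0) ip (app (adj ip (F i k)) a) (app (adj ip (F ord0 k)) b) = 0.
  move=> a b i ha hb hi.
  rewrite -(adj_spec (DtRs i hi a ha) (DtR i hi b hb)).
  rewrite (swapD b (or_intror hb) i hi) (ipNr Hip) (ip_sumr Hip).
  have e1 : \sum_(k < d.+1 | k != ord0) ip a (Sm i k (app (adj ip (F ord0 k)) b))
      = \sum_(k < d.+1 | k != ord0) ip (app (adj ip (tot (Sm i k))) a) (app (adj ip (F ord0 k)) b).
    by apply: eq_bigr => k hk; rewrite (SAl i k hi hk).
  have e2 : \sum_(k < d.+1 | k != ord0) ip (app (adj ip (F i k)) a) (app (adj ip (F ord0 k)) b)
      = \sum_(k < d.+1 | k != ord0) ip (app (adj ip (tot (Sm i k))) a) (app (adj ip (F ord0 k)) b)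
        - ip a (app (adj ip (F ord0 i)) b).
    rewrite (eq_bigr (fun k => ip (app (adj ip (tot (Sm i k))) a) (app (adj ip (F ord0 k)) b)
       - ip (if i == k then a else 0) (app (adj ip (F ord0 k)) b))); last first.
      by move=> k hk; rewrite (adjF i k hi hk) (ipBl Hip).
    by rewrite sumrB; congr (_ - _); apply: (sum_delta_l' Hip).
  rewrite e1 e2; ring.
have Sij : forall a b i j, i != ord0 -> j != ord0 ->
    ip a (app (adj ip (F j i)) b) + ip (app (adj ip (F i j)) a) b
    + \sum_(k < d.+1 | k != ord0) ip (app (adj ip (F i k)) a) (app (adj ip (F j k)) b) = 0.
  move=> a b i j hi hj.
  have e : \sum_(k < d.+1 | k != ord0) ip (app (adj ip (F i k)) a) (app (adj ip (F j k)) b)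
     = \sum_(k < d.+1 | k != ord0)
          ip (app (adj ip (tot (Sm i k))) a) (app (adj ip (tot (Sm j k))) b)
       - \sum_(k < d.+1 | k != ord0) ip (app (adj ip (tot (Sm i k))) a) (if j == k then b else 0)
       - \sum_(k < d.+1 | k != ord0) ip (if i == k then a else 0) (app (adj ip (tot (Sm j k))) b)
       + \sum_(k < d.+1 | k != ord0) ip (if i == k then a else 0) (if j == k then b else 0).
    rewrite -!sumrB -big_split.
    by apply: eq_bigr => k hk; rewrite (adjF i k hi hk) (adjF j k hj hk) (ipBB Hip).
  have e1 : \sum_(k < d.+1 | k != ord0)
          ip (app (adj ip (tot (Sm i k))) a) (app (adj ip (tot (Sm j k))) b)
      = ip a (if i == j then b else 0).
    rewrite -(Hu2 i j hi hj b) (ip_sumr Hip).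
    by apply: eq_bigr => k hk; rewrite (SAl i k hi hk).
  have e2 : \sum_(k < d.+1 | k != ord0) ip (app (adj ip (tot (Sm i k))) a) (if j == k then b else 0)
      = ip (app (adj ip (tot (Sm i j))) a) b by apply: (sum_delta_r' Hip).
  have e3 : \sum_(k < d.+1 | k != ord0) ip (if i == k then a else 0) (app (adj ip (tot (Sm j k))) b)
      = ip a (app (adj ip (tot (Sm j i))) b) by apply: (sum_delta_l' Hip).
  have e4 : \sum_(k < d.+1 | k != ord0) ip (if i == k then a else 0) (if j == k then b else 0)
      = ip a (if j == i then b else 0)
    by apply: (sum_delta_l' Hip (fun k => if j == k then b else 0)).
  rewrite e e1 e2 e3 e4.
  rewrite (adjF j i hj hi) (adjF i j hi hj) (ipBr Hip) (ipBl Hip).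
  have hd : ip (if i == j then a else 0) b = ip a (if i == j then b else 0).
    by case: eqP => _; rewrite ?(ip0r Hip) ?(ip0l Hip).
  have hd2 : ip a (if j == i then b else 0) = ip a (if i == j then b else 0).
    by rewrite eq_sym.
  rewrite hd hd2; ring.
split.
- exact: c1.
- by split; [exact: c2a|exact: c2b|exact: c2c].
- by move=> u i hu hi; split; [exact: c3a|exact: c3b].
- exact: c4.
move=> u v hu hv; split; apply: big1 => i _; apply: big1 => j _.
  have dK : forall i, dom (F ord0 ord0) (u i) by move=> i'; apply: hu.
  have [->|hi] := eqVneq i ord0; have [->|hj] := eqVneq j ord0.
  - exact: (id00 Hip (c2b _ (dK ord0))).
  - exact: T0j.
  - exact: Ti0.
  - exact: Tij.
have [->|hi] := eqVneq i ord0; have [->|hj] := eqVneq j ord0.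
- exact: (id00 Hip (c2c _ (DtKs _ (hv ord0)))).
- exact: S0j.
- exact: Si0.
- exact: Sij.
Qed.
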